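(* The set of elements $(d,e;m)\in\mathcal{E}$ with $d\geq e$ whose vector $m$ has at most $7$ nonzero entries is finite, and consists exactly of $$(0,0;-1),\ (1,0;1),\ (1,1;1^{\times3}),\ (2,1;1^{\times5}),\ (2,2;2,1^{\times5}),$$ $$(3,1;1^{\times7}),\ (3,2;2^{\times2},1^{\times5}),\ (3,3;2^{\times4},1^{\times3}),\ (4,3;2^{\times6},1),\ (4,4;3,2^{\times6}).$$
   Context: Notation: $x^{\times l}$ denotes $x$ repeated $l$ times; trailing zeros of $m$ are ignored. The set $\mathcal{E}$: a Cremona transform of an integer tuple $(\delta;n_1,\dots,n_k)$ with $n_1\geq\dots\geq n_k$ is $(2\delta-n_1-n_2-n_3;\delta-n_2-n_3,\delta-n_1-n_3,\delta-n_1-n_2,n_4,\dots,n_k)$; a Cremona move is a Cremona transform followed by a permutation of the entries after the semicolon. $\mathcal{E}$ consists of $(0,0;-1)$ together with all integer tuples $(d,e;m_1,\dots,m_M)$ with $d,e\geq0$, $m_1\geq\dots\geq m_M\geq0$, satisfying $\sum m_i=2(d+e)-1$, $\sum m_i^2=2de+1$, and such that $(d+e-m_1;d-m_1,e-m_1,m_2,\dots,m_M)$ reduces to $(0;-1,0,\dots,0)$ by repeated Cremona moves. (Equivalently, classes $dS_1+eS_2-\sum m_iF_i$ in the $M$-fold blow-up of $S^2\times S^2$ represented by symplectically embedded $(-1)$-spheres.) $\mathcal{E}$ is symmetric under swapping $d$ and $e$. *)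

(* Defs.v *)
From Stdlib Require Import Relations.
From mathcomp Require Import all_boot all_order all_algebra.
Set Implicit Arguments. Unset Strict Implicit. Unset Printing Implicit Defensive.
Import Order.TTheory GRing.Theory Num.Theory.
Local Open Scope ring_scope.

(* A tuple (delta; n_1,...,n_k) is a pair (delta, [:: n_1; ...; n_k]). *)
Definition ituple := (int * seq int)%type.

(* Cremona transform of (delta; n1,...,nk), assuming n1 >= ... >= nk, k >= 3. *)
Definition cremona_transform (t : ituple) : option ituple :=
  match t.2 with
  | n1 :: n2 :: n3 :: rest =>
      Some (2 * t.1 - n1 - n2 - n3,
            [:: t.1 - n2 - n3; t.1 - n1 - n3; t.1 - n1 - n2] ++ rest)
  | _ => None
  end.

(* One Cremona move: (trailing zeros being ignored, the tuple may first be
   padded with zeros), order the entries nonincreasingly, apply the Cremona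
   transform, then permute the entries arbitrarily. *)
Definition cremona_move (t u : ituple) : Prop :=
  exists k : nat,
  exists v : seq int,
    cremona_transform (t.1, sort (>=%R) (t.2 ++ nseq k 0)) = Some (u.1, v)
    /\ perm_eq v u.2.

(* t reduces to (0; -1, 0, ..., 0) by repeated Cremona moves
   (equality up to zero entries and order of entries). *)
Definition reduces_to_exc (t : ituple) : Prop :=
  exists u, clos_refl_trans ituple cremona_move t u /\
            u.1 = 0 /\ perm_eq [seq x <- u.2 | x != 0] [:: -1].

(* Membership in the set E (m given as a list; trailing zeros ignored). *)
Definition in_calE (d e : int) (m : seq int) : Prop :=
  (d = 0 /\ e = 0 /\ exists k : nat, m = -1 :: nseq k 0) \/
  (0 <= d /\ 0 <= e /\ sorted (>=%R) m /\ all (fun x => 0 <= x) m /\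
      \sum_(x <- m) x = 2 * (d + e) - 1 /\
      \sum_(x <- m) x ^+ 2 = 2 * d * e + 1 /\
      reduces_to_exc (d + e - head 0 m, [:: d - head 0 m, e - head 0 m & behead m])).

Definition E_list : seq (int * int * seq int) :=
  [:: (0, 0, [:: -1]);
      (1, 0, [:: 1]);
      (1, 1, nseq 3 1);
      (2, 1, nseq 5 1);
      (2, 2, 2 :: nseq 5 1);
      (3, 1, nseq 7 1);
      (3, 2, nseq 2 2 ++ nseq 5 1);
      (3, 3, nseq 4 2 ++ nseq 3 1);
      (4, 3, nseq 6 2 ++ [:: 1]);
      (4, 4, 3 :: nseq 6 2)].

(* Main.v *)
Require Import Defs.
From Stdlib Require Import Relations.
From mathcomp Require Import all_boot all_order all_algebra.
From mathcomp Require Import zify ring lra.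
Import Order.TTheory GRing.Theory Num.Theory.
Local Open Scope ring_scope.


Lemma ge_trans : transitive (>=%R : rel int).
Proof. by move=> y x z /= Hyx Hzy; apply: le_trans Hzy Hyx. Qed.
Lemma ge_anti : antisymmetric (>=%R : rel int).
Proof. by move=> x y /= /andP [H1 H2]; apply/eqP; rewrite eq_le H1 H2. Qed.
Lemma ge_total : total (>=%R : rel int).
Proof. by move=> x y /=; apply: le_total. Qed.

Lemma move_gen (D : int) s a b c r k :
  sort (>=%R) s = [:: a, b, c & r] -> 0 <= c ->
  cremona_move (D, s ++ nseq k 0)
    (2 * D - a - b - c, [:: D - b - c; D - a - c; D - a - b] ++ r ++ nseq k 0).
Proof.
move=> Hs Hc; exists 0%N, ([:: D - b - c; D - a - c; D - a - b] ++ sort (>=%R) (r ++ nseq k 0)).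
have Hsrt : sorted (>=%R) [:: a, b, c & r] by rewrite -Hs; exact: (sort_sorted ge_total).
have -> : sort (>=%R) ((s ++ nseq k 0) ++ nseq 0 0) = [:: a, b, c & sort (>=%R) (r ++ nseq k 0)].
  apply: (sorted_eq ge_trans ge_anti); first exact: (sort_sorted ge_total).
    move: Hsrt => /= /and3P [-> -> ]; rewrite (path_sortedE ge_trans) => /andP [Hcr _].
    rewrite (path_sortedE ge_trans) (sort_sorted ge_total) andbT.
    rewrite all_sort all_cat Hcr /=; apply/allP => x /nseqP [-> _] //.
  rewrite perm_sort cats0.
  apply: (@perm_trans _ (sort (>=%R) s ++ nseq k 0)).
    by rewrite perm_cat2r perm_sym perm_sort.
  by rewrite Hs /= !perm_cons perm_sym perm_sort.
by split => //; rewrite /= !perm_cons perm_sort.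
Qed.

Fixpoint redb (f : nat) (D : int) (s : seq int) : bool :=
  match f with
  | 0%N => false
  | f'.+1 =>
    ((D == 0) && perm_eq [seq x <- s | x != 0] [:: -1]) ||
    match sort (>=%R) s with
    | a :: b :: c :: r =>
        (0 <= c) && redb f' (2 * D - a - b - c) ([:: D - b - c; D - a - c; D - a - b] ++ r)
    | _ => false
    end
  end.

Lemma redb_ok f D s k : redb f D s -> reduces_to_exc (D, s ++ nseq k 0).
Proof.
elim: f D s => [//|f IH] D s /= /orP [/andP [/eqP HD Hp]|].
  exists (D, s ++ nseq k 0); split; first exact: rt_refl.
  by rewrite filter_cat filter_nseq eqxx /= cats0.
case Hsort: (sort _ s) => [|a [|b [|c r]]] //= /andP [Hc /IH [u [Hu Hu2]]].
exists u; split => //; apply: rt_trans Hu; apply: rt_step.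
exact: move_gen.
Qed.

Lemma sorted_nseq0 k : sorted (>=%R) (nseq k (0 : int)).
Proof. elim: k => // k IH; case: k IH => //= k IH; by rewrite lexx IH. Qed.

Lemma sum_nseq0 k : \sum_(x <- nseq k (0%R:int)) x = 0.
Proof. by elim: k => [|k IH]; rewrite ?big_nil //= big_cons IH addr0. Qed.
Lemma sum_nseq0' k : \sum_(x <- nseq k (0%R:int)) x ^+ 2 = 0.
Proof. by elim: k => [|k IH]; rewrite ?big_nil //= big_cons IH expr2 mulr0 addr0. Qed.

Definition sumi (s : seq int) := foldr (fun x acc => x + acc) 0 s.
Definition sqi (s : seq int) := foldr (fun x acc => x * x + acc) 0 s.
Lemma sumiE s : \sum_(x <- s) x = sumi s.
Proof. by elim: s => [|x s IH]; rewrite ?big_nil // big_cons IH. Qed.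
Lemma sqiE s : \sum_(x <- s) x ^+ 2 = sqi s.
Proof. by elim: s => [|x s IH]; rewrite ?big_nil // big_cons IH expr2. Qed.

Lemma back (d e : int) (m0 : seq int) k :
  [&& (0 <= d), (0 <= e), (e <= d), sorted (>=%R) m0, all (fun x => 0 < x) m0,
      (sumi m0 == 2 * (d + e) - 1), (sqi m0 == 2 * d * e + 1),
      (count (fun x : int => x != 0%R) m0 <= 7)%N &
      redb 10 (d + e - head 0 m0) [:: d - head 0 m0, e - head 0 m0 & behead m0]] ->
  m0 != [::] ->
  in_calE d e (m0 ++ nseq k 0) /\ e <= d /\ (count (fun x : int => x != 0%R) (m0 ++ nseq k (0%R:int)) <= 7)%N.
Proof.
move=> /and5P [Hd He Hed Hs /and5P [Hpos /eqP Hsum /eqP Hsq Hc Hr]] Hne.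
rewrite -sumiE in Hsum; rewrite -sqiE in Hsq.
move: Hr; set R := redb _ _ _ => Hr.
split; last split => //; last by rewrite count_cat count_nseq eqxx mul0n addn0.
right; do 2! split => //.
split.
  rewrite (sorted_pairwise ge_trans) pairwise_cat; apply/and3P; split;
    [|by rewrite -(sorted_pairwise ge_trans)|by rewrite -(sorted_pairwise ge_trans) sorted_nseq0].
  apply/allrelP => x y Hx /nseqP [-> _] /=.
  by apply: ltW; move/allP: Hpos => /(_ x Hx).
split.
  rewrite all_cat; apply/andP; split; last by apply/allP => x /nseqP [-> _].
  by apply/allP => x /(allP Hpos) /ltW.
split; first by rewrite big_cat sum_nseq0; exact: (etrans (addr0 _) Hsum).
split; first by rewrite big_cat sum_nseq0'; exact: (etrans (addr0 _) Hsq).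
rewrite /R {R} in Hr.
case: m0 Hne Hr {Hs Hpos Hsum Hsq Hc} => [//|x m'] _ Hr.
exact: (@redb_ok _ _ _ k Hr).
Qed.

Local Close Scope ring_scope.


Fixpoint parts (k n b : nat) : seq (seq nat) :=
  match k with
  | 0 => if n == 0 then [:: [::]] else [::]
  | k'.+1 => if n == 0 then [:: [::]] else
      flatten [seq [seq a :: p | p <- parts k' (n - a) a] | a <- iota 1 (minn b n)]
  end.

Lemma geq_trans : transitive geq.
Proof. move=> y x z /= ? ?; lia. Qed.

Lemma parts_complete q k n b : sorted geq q -> all (fun x => 0 < x) q -> size q <= k ->
  all (fun x => x <= b) q -> sumn q = n -> q \in parts k n b.
Proof.
elim: q k n b => [|a q IH] k n b.
  by move=> _ _ _ _ <-; case: k.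
move=> Hs /= /andP [Ha Hq] Hk /andP [Hab Hb] Hn.
case: k Hk => [//|k] /= Hk.
have -> : (n == 0) = false by apply/eqP; lia.
apply/flatten_mapP; exists a; first by rewrite mem_iota; lia.
rewrite mem_map; last by move=> x y [].
have Hs' := path_sorted Hs.
move: Hs => /=; rewrite (path_sortedE geq_trans) => /andP [Hall _].
apply: IH => //; try lia.
Qed.

Definition sqn (q : seq nat) := sumn (map (fun x => x * x) q).

Lemma amgm a x : 2 * a * x <= x * x + a * a.
Proof.
case: (leqP a x) => H.
  have [t ->] : exists t, x = a + t by exists (x - a); lia.
  nia.
have [t ->] : exists t, a = x + t by exists (a - x); lia.
nia.
Qed.

Lemma cs1 a q : 2 * a * sumn q <= sqn q + size q * (a * a).
Proof.
elim: q => [|x q IH] /=; first by lia.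
rewrite /sqn /= -/(sqn q); have := amgm a x; nia.
Qed.

Lemma cs q : sumn q * sumn q <= size q * sqn q.
Proof.
elim: q => [|x q IH] /=; first by lia.
rewrite /sqn /= -/(sqn q); have := cs1 x q; nia.
Qed.

Definition Lnat : seq (nat * nat * seq nat) :=
  [:: (1, 0, [:: 1]); (1, 1, nseq 3 1); (2, 1, nseq 5 1); (2, 2, 2 :: nseq 5 1);
      (3, 1, nseq 7 1); (3, 2, nseq 2 2 ++ nseq 5 1); (3, 3, nseq 4 2 ++ nseq 3 1);
      (4, 3, nseq 6 2 ++ [:: 1]); (4, 4, 3 :: nseq 6 2)].

Definition check := all (fun d => all (fun e =>
   all (fun q => (sqn q == 2 * d * e + 1) ==> ((d, e, q) \in Lnat))
     (parts 7 (2 * (d + e) - 1) (2 * (d + e) - 1))) (iota 0 d.+1)) (iota 0 10).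

Lemma check_ok : check.
Proof. by vm_compute. Qed.

Lemma Lnat_E : all (fun t => ((Posz t.1.1, Posz t.1.2, map Posz t.2) \in E_list)) Lnat.
Proof. by vm_compute. Qed.

Lemma fwd_nat dn en q : en <= dn -> sorted geq q -> all (fun x => 0 < x) q -> size q <= 7 ->
  sumn q = 2 * (dn + en) - 1 -> sqn q = 2 * dn * en + 1 -> (dn, en, q) \in Lnat.
Proof.
move=> Hed Hs Hp Hsz Hsum Hsq.
have Hpos : 0 < dn + en.
  case: q Hp Hsum Hsq {Hs Hsz} => [|x q] /=; first by rewrite /sqn /=; lia.
  by move=> /andP [Hx _]; lia.
have Hb : dn + en <= 9.
  have := cs q; rewrite Hsum Hsq => Hc.
  have Hc2 : (2 * (dn + en) - 1) * (2 * (dn + en) - 1) <= 7 * (2 * dn * en + 1).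
    by apply: (leq_trans Hc); rewrite leq_mul2r Hsz orbT.
  nia.
move: check_ok => /allP /(_ dn); rewrite mem_iota => /(_ ltac:(lia)).
move=> /allP /(_ en); rewrite mem_iota => /(_ ltac:(lia)).
move=> /allP /(_ q) /(_ _) /implyP; apply; last by rewrite Hsq.
apply: parts_complete => //.
apply/allP => x Hx; rewrite -Hsum.
elim: q Hx {Hs Hp Hsz Hsum Hsq} => [//|y q IH] /=; rewrite inE => /orP [/eqP ->|/IH]; lia.
Qed.

Local Open Scope ring_scope.


Lemma split_zeros (m : seq int) : sorted (>=%R) m -> all (fun x => 0 <= x) m ->
  exists p (k : nat), m = p ++ nseq k 0 /\ all (fun x => 0 < x) p.
Proof.
elim: m => [|x m IH] /=; first by exists [::], 0%N.
move=> Hs /andP [Hx Hm]; have Hs' := path_sorted Hs.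
have [p [k [Em Hp]]] := IH Hs' Hm.
have [Hx0|Hx0] := boolP (0 < x).
  by exists (x :: p), k; rewrite Em /= Hx0 Hp.
have x0 : x = 0 by apply/eqP; rewrite eq_le Hx andbT leNgt.
move: Hs; rewrite (path_sortedE ge_trans) Em => /andP [Hall _].
case: p Em Hp Hall => [|y p] Em Hp Hall.
  by exists [::], k.+1; rewrite x0.
move: Hall Hp => /= /andP [Hy _]. case/andP => Hy' _.
by move: (lt_le_trans Hy' Hy); rewrite x0 ltxx.
Qed.

Lemma pos_nat (p : seq int) : all (fun x => 0 <= x) p -> p = map Posz (map absz p).
Proof. elim: p => [|[n|n] p IH] //= H; by rewrite -IH. Qed.

Lemma sumi_cat s k : sumi (s ++ nseq k 0) = sumi s.
Proof.
elim: s => [|x s IH] /=; last by rewrite IH.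
by elim: k => [|k IH] //=; rewrite IH addr0.
Qed.
Lemma sqi_cat s k : sqi (s ++ nseq k 0) = sqi s.
Proof.
elim: s => [|x s IH] /=; last by rewrite IH.
by elim: k => [|k IH] //=; rewrite IH mulr0 addr0.
Qed.
Lemma sumi_nat q : sumi (map Posz q) = Posz (sumn q).
Proof. by elim: q => [|x q IH] //=; rewrite IH PoszD. Qed.
Lemma sqi_nat q : sqi (map Posz q) = Posz (sqn q).
Proof. by elim: q => [|x q IH] //=; rewrite /sqn /= -/(sqn q) IH PoszD PoszM. Qed.

Theorem lemma4p3 :
  forall (d e : int) (m : seq int),
    (in_calE d e m /\ e <= d /\ (count (fun x : int => x != 0%R) m <= 7)%N) <->
    exists d0 e0 m0 (k : nat),
      (d0, e0, m0) \in E_list /\ d = d0 /\ e = e0 /\ m = m0 ++ nseq k 0.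
Proof.
move=> d e m; split.
  move=> [[[-> [-> [k ->]]] | [Hd [He [Hs [Hnn [Hsum [Hsq _]]]]]]] [Hed Hc]].
    by exists 0, 0, [:: -1], k.
  have [p [k [Em Hp]]] := @split_zeros m Hs Hnn.
  subst m.
  have Ep : p = map Posz (map absz p).
    by apply: pos_nat; apply/allP => x /(allP Hp) /ltW.
  set q := map absz p in Ep.
  case: d Hd Hed Hsum Hsq => [dn|//] _; case: e He => [en|//] _ Hed Hsum Hsq.
  rewrite sumiE sumi_cat Ep sumi_nat in Hsum.
  rewrite sqiE sqi_cat Ep sqi_nat in Hsq.
  have Hin : (dn, en, q) \in Lnat.
    apply: fwd_nat.
    - by rewrite lez_nat in Hed.
    - have := (cat_sorted2 Hs).1; rewrite Ep sorted_map.
      by apply: sub_sorted => x y /=; rewrite lez_nat.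
    - by move: Hp; rewrite Ep all_map; apply: sub_all => x /=; rewrite ltz_nat.
    - move: Hc; rewrite count_cat count_nseq eqxx mul0n addn0.
      have -> : count (fun x : int => x != 0) p = size p.
        apply/eqP; rewrite -all_count; apply/allP => x /(allP Hp) H.
        by rewrite gt_eqF.
      by rewrite Ep !size_map.
    - lia.
    - lia.
  exists (Posz dn), (Posz en), (map Posz q), k; split; last by rewrite -Ep.
  exact: (allP Lnat_E _ Hin).
move=> [d0 [e0 [m0 [k [Hin [-> [-> ->]]]]]]].
move: Hin; rewrite /E_list.
rewrite in_cons => /predU1P [[-> -> ->]|].
  split; last by rewrite count_cat count_nseq eqxx mul0n.
  by left; split => //; split => //; exists k.
do 8! (rewrite in_cons => /predU1P [[-> -> ->]|]; first by apply: back; vm_compute).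
by rewrite in_cons => /predU1P [[-> -> ->]|] //; apply: back; vm_compute.
Qed.
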